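(* Let $R$ be a bounded principal ideal domain. Then a nonzero non-unit $a\in R$ is c-irreducible if and only if it is irreducible. Equivalently, a nonzero left ideal of $R$ is completely prime if and only if it is a maximal left ideal.
   Context: A principal ideal domain (PID) is a (not necessarily commutative) domain in which every left ideal and every right ideal is principal. An element $p$ is bounded if $Rp$ contains a nonzero two-sided ideal; the PID $R$ is bounded if every nonzero non-unit of $R$ is bounded. A non-unit $a$ is irreducible if $a=bc$ implies $b$ or $c$ is a unit. Elements $b,c$ are similar if $R/Rb\cong R/Rc$ as left $R$-modules. A nonzero $a$ is c-reducible if $a=bb'=c'c$ for some non-units $b,b',c',c$ with $b$ similar to $c$; otherwise c-irreducible. A left ideal $\mathfrak{p}$ is completely prime if $\mathfrak{p}\neq R$ and $ab\in\mathfrak{p}$, $\mathfrak{p}b\subseteq\mathfrak{p}$ imply $a\in\mathfrak{p}$ or $b\in\mathfrak{p}$. *)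

(* Defs.v *)
From mathcomp Require Import all_boot all_algebra.
Set Implicit Arguments. Unset Strict Implicit. Unset Printing Implicit Defensive.
Import GRing.Theory.
Local Open Scope ring_scope.

Section Defs.
Variable R : unitRingType.

Definition is_left_ideal (I : R -> Prop) : Prop :=
  [/\ I 0, (forall x y, I x -> I y -> I (x + y)) & (forall r x, I x -> I (r * x))].

Definition is_right_ideal (I : R -> Prop) : Prop :=
  [/\ I 0, (forall x y, I x -> I y -> I (x + y)) & (forall r x, I x -> I (x * r))].

Definition is_twosided_ideal (I : R -> Prop) : Prop :=
  is_left_ideal I /\ is_right_ideal I.

Definition lprinc (a : R) : R -> Prop := fun x => exists r, x = r * a.
Definition rprinc (a : R) : R -> Prop := fun x => exists r, x = a * r.

Definition is_domain : Prop := forall a b : R, a * b = 0 -> a = 0 \/ b = 0.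

Definition is_PID : Prop :=
  [/\ is_domain,
      (forall I, is_left_ideal I -> exists a, forall x, I x <-> lprinc a x) &
      (forall I, is_right_ideal I -> exists a, forall x, I x <-> rprinc a x)].

Definition bounded_elt (p : R) : Prop :=
  exists I, [/\ is_twosided_ideal I, (exists x, I x /\ x <> 0)
              & (forall x, I x -> lprinc p x)].

Definition bounded_ring : Prop :=
  forall p : R, p <> 0 -> p \isn't a GRing.unit -> bounded_elt p.

Definition irreducible_elt (a : R) : Prop :=
  a \isn't a GRing.unit /\
  forall b c, a = b * c -> b \is a GRing.unit \/ c \is a GRing.unit.

(* R/Rb ~= R/Rc as left R-modules, written out on representatives:
   phi : R -> R induces a well-defined, R-linear, bijective map R/Rb -> R/Rc. *)
Definition similar (b c : R) : Prop :=
  exists phi : R -> R,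
    [/\ (forall x y, lprinc b (x - y) -> lprinc c (phi x - phi y)),
        (forall x y, lprinc c (phi (x + y) - (phi x + phi y))),
        (forall r x, lprinc c (phi (r * x) - r * phi x)),
        (forall x y, lprinc c (phi x - phi y) -> lprinc b (x - y)) &
        (forall y, exists x, lprinc c (y - phi x))].

Definition c_reducible (a : R) : Prop :=
  a <> 0 /\
  exists b b' c' c,
    [/\ [/\ b \isn't a GRing.unit, b' \isn't a GRing.unit,
            c' \isn't a GRing.unit & c \isn't a GRing.unit],
        a = b * b', a = c' * c & similar b c].

Definition c_irreducible (a : R) : Prop := ~ c_reducible a.

Definition completely_prime (P : R -> Prop) : Prop :=
  (exists x, ~ P x) /\
  forall a b, P (a * b) -> (forall x, P x -> P (x * b)) -> P a \/ P b.

Definition maximal_left_ideal (P : R -> Prop) : Prop :=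
  [/\ is_left_ideal P, (exists x, ~ P x) &
      forall J, is_left_ideal J -> (forall x, P x -> J x) ->
        (forall x, J x <-> P x) \/ (forall x, J x)].

End Defs.

(* Main.v *)
Require Import Defs.
From mathcomp Require Import all_boot all_algebra.
From Stdlib Require Import Classical IndefiniteDescription.
Import GRing.Theory.
Local Open Scope ring_scope.
Set Implicit Arguments. Unset Strict Implicit.

Lemma lp_left (R : unitRingType) (a : R) : is_left_ideal (lprinc a).
Proof.
split.
- by exists 0; rewrite mul0r.
- move=> x y [r ->] [s ->]; exists (r + s); by rewrite mulrDl.
- move=> r x [s ->]; exists (r * s); by rewrite mulrA.
Qed.

Lemma lp0 (R : unitRingType) (a : R) : lprinc a 0.
Proof. by case: (lp_left a). Qed.
Lemma lpD (R : unitRingType) (a x y : R) : lprinc a x -> lprinc a y -> lprinc a (x + y).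
Proof. by case: (lp_left a) => _ H _; apply: H. Qed.
Lemma lpM (R : unitRingType) (a r x : R) : lprinc a x -> lprinc a (r * x).
Proof. by case: (lp_left a) => _ _ H; apply: H. Qed.
Lemma lpN (R : unitRingType) (a x : R) : lprinc a x -> lprinc a (- x).
Proof. move=> h; rewrite -mulN1r; exact: lpM. Qed.
Lemma lpB (R : unitRingType) (a x y : R) : lprinc a x -> lprinc a y -> lprinc a (x - y).
Proof. move=> hx hy; apply: lpD => //; exact: lpN. Qed.
Lemma lpA (R : unitRingType) (a x : R) : lprinc a (x * a).
Proof. by exists x. Qed.
Lemma lp_self (R : unitRingType) (a : R) : lprinc a a.
Proof. by exists 1; rewrite mul1r. Qed.

Lemma dom_inv (R : unitRingType) : is_domain R -> forall x y : R, x * y = 1 -> y * x = 1.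
Proof.
move=> hd x y h.
have : (y * x - 1) * y = 0 by rewrite mulrBl -mulrA h mulr1 mul1r subrr.
case/hd => [/eqP|]; first by rewrite subr_eq0 => /eqP.
move=> y0; move: h; rewrite y0 mulr0 => /esym/eqP; by rewrite oner_eq0.
Qed.

Lemma unit_of (R : unitRingType) : is_domain R -> forall m b : R, m * b = 1 -> b \is a GRing.unit.
Proof. move=> hd m b h; apply/unitrP; exists m; split => //; exact: dom_inv. Qed.

Lemma canc_r (R : unitRingType) : is_domain R -> forall c x y : R, c <> 0 -> x * c = y * c -> x = y.
Proof.
move=> hd c x y c0 h.
have : (x - y) * c = 0 by rewrite mulrBl h subrr.
by case/hd => // /eqP; rewrite subr_eq0 => /eqP.
Qed.

Lemma canc_l (R : unitRingType) : is_domain R -> forall c x y : R, c <> 0 -> c * x = c * y -> x = y.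
Proof.
move=> hd c x y c0 h.
have : c * (x - y) = 0 by rewrite mulrBr h subrr.
by case/hd => // /eqP; rewrite subr_eq0 => /eqP.
Qed.

Lemma inv_gen (R : unitRingType) (I : R -> Prop) : is_PID R -> is_twosided_ideal I ->
  (exists x, I x /\ x <> 0) ->
  exists rho, [/\ rho <> 0, forall x, I x <-> lprinc rho x & forall x, I x <-> rprinc rho x].
Proof.
move=> [hd hl hr] [HL HR] [x0 [Ix0 x00]].
have [rho Hrho] := hl I HL.
have [pi Hpi] := hr I HR.
have rho0 : rho <> 0.
  by move=> e; apply x00; have [r ->] := (Hrho x0).1 Ix0; rewrite e mulr0.
have pi0 : pi <> 0.
  by move=> e; apply x00; have [r ->] := (Hpi x0).1 Ix0; rewrite e mul0r.
have Irho : I rho by apply/Hrho; exact: lp_self.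
have Ipi : I pi by apply/Hpi; exists 1; rewrite mulr1.
have [v ev] := (Hpi rho).1 Irho.
have [u eu] := (Hrho pi).1 Ipi.
case: (HL) => _ _ HLm; case: (HR) => _ _ HRm.
have [w ew] := (Hpi (u * pi)).1 (HLm u pi Ipi).
have wv : w * v = 1.
  apply: (canc_l hd pi0); rewrite mulr1 mulrA -ew -mulrA -ev -eu //.
have vw : v * w = 1 by apply: dom_inv.
have epi : pi = rho * w by rewrite ev -mulrA vw mulr1.
exists rho; split => // x; split.
- move=> Ix; have [t ->] := (Hpi x).1 Ix; exists (w * t); by rewrite epi mulrA.
- by move=> [t ->]; apply: HRm.
Qed.

Lemma keyL (R : unitRingType) : is_PID R -> bounded_ring R ->
  forall a b c : R, a <> 0 -> a = b * c -> b \isn't a GRing.unit -> c \isn't a GRing.unit ->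
  exists x y, [/\ ~ lprinc a x, ~ lprinc a y, lprinc a (x * y), lprinc a (a * y) & lprinc c y].
Proof.
move=> hPID hbd a b c a0 eab bnu cnu.
have hPID' := hPID; case: hPID' => hd hl hr.
have b0 : b <> 0 by move=> e; apply: a0; rewrite eab e mul0r.
have c0 : c <> 0 by move=> e; apply: a0; rewrite eab e mulr0.
have nlb : forall m, m * b <> 1 by move=> m /(unit_of hd) h; rewrite h in bnu.
have nlc : forall m, m * c <> 1 by move=> m /(unit_of hd) h; rewrite h in cnu.
have cnRa : ~ lprinc a c.
  move=> [m em]; apply: (nlb m); apply: (canc_r hd c0); by rewrite mul1r -mulrA -eab -em.
pose Pb := fun r => forall u, lprinc b (r * u).
have Pb2 : is_twosided_ideal Pb.
  split; split.
  - by move=> u; rewrite mul0r; exact: lp0.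
  - by move=> x y hx hy u; rewrite mulrDl; apply: lpD.
  - by move=> r x hx u; rewrite -mulrA; apply: lpM.
  - by move=> u; rewrite mul0r; exact: lp0.
  - by move=> x y hx hy u; rewrite mulrDl; apply: lpD.
  - by move=> r x hx u; rewrite -mulrA; apply: hx.
have [I [[IL IR] [x0 [Ix0 x00]] IsubRb]] := hbd b b0 bnu.
have Pbx0 : Pb x0.
  move=> u; apply: IsubRb; by case: IR => _ _ H; apply: H.
have [rho [rho0 Hl Hr]] := inv_gen hPID Pb2 (ex_intro _ x0 (conj Pbx0 x00)).
have PbsubRb : forall p, Pb p -> lprinc b p by move=> p /(_ 1); rewrite mulr1.
have Pb_r : forall t, Pb (rho * t) by move=> t; apply/Hr; exists t.
have Pb_l : forall t, Pb (t * rho) by move=> t; apply/Hl; exists t.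
have commL : forall t, exists t', rho * t = t' * rho by move=> t; apply/Hl/Pb_r.
have commR : forall t, exists t', t * rho = rho * t' by move=> t; apply/Hr/Pb_l.
pose Q := fun w => exists p z, Pb p /\ w = p + z * c.
have QL : is_left_ideal Q.
  split.
  - exists 0, 0; split; [by move=> u; rewrite mul0r; exact: lp0 | by rewrite mul0r addr0].
  - move=> x y [p [z [hp ->]]] [p' [z' [hp' ->]]]; exists (p + p'), (z + z'); split.
      by case: Pb2 => [[_ H _] _]; apply: H.
    by rewrite mulrDl addrACA.
  - move=> r x [p [z [hp ->]]]; exists (r * p), (r * z); split.
      by case: Pb2 => [[_ _ H] _]; apply: H.
    by rewrite mulrDr mulrA.
have [q Hq] := hl Q QL.
case: (classic (Q 1)) => [Q1 | nQ1].
- have [p0 [z1 [hp0 e1]]] := Q1.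
  have [u0 eu0] := (Hr p0).1 hp0.
  have powL : forall n t, exists t', rho ^+ n * t = t' * rho ^+ n.
    elim=> [|n IH] t; first by exists t; rewrite expr0 mulr1 mul1r.
    have [t1 e1'] := IH t; have [t2 e2] := commL t1.
    by exists t2; rewrite exprS -mulrA e1' mulrA e2 -mulrA.
  have powR : forall n t, exists t', t * rho ^+ n = rho ^+ n * t'.
    elim=> [|n IH] t; first by exists t; rewrite expr0 mulr1 mul1r.
    have [t1 e1'] := commR t; have [t2 e2] := IH t1.
    by exists t2; rewrite exprS mulrA e1' -mulrA e2 mulrA.
  pose K := fun n r => lprinc a (rho ^+ n * r).
  have KL : forall n, is_left_ideal (K n).
    move=> n; split.
    - by rewrite /K mulr0; exact: lp0.
    - by move=> x y hx hy; rewrite /K mulrDr; apply: lpD.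
    - move=> r x hx; rewrite /K; have [t' et] := powL n r.
      by rewrite mulrA et -mulrA; apply: lpM.
  have Kmono : forall n x, K n x -> K n.+1 x.
    by move=> n x hx; rewrite /K exprS -mulrA; exact: lpM.
  have Kmono' : forall n m x, (n <= m)%N -> K n x -> K m x.
    move=> n m x; elim: m => [|m IH]; first by rewrite leqn0 => /eqP ->.
    rewrite leq_eqVlt => /orP [/eqP -> //|]; rewrite ltnS => h hx; apply: Kmono; exact: IH.
  pose U := fun x => exists n, K n x.
  have UL : is_left_ideal U.
    split.
    - by exists 0%N; case: (KL 0%N).
    - move=> x y [n hx] [m hy]; exists (maxn n m); case: (KL (maxn n m)) => _ H _; apply: H.
        by apply: (Kmono' n) => //; exact: leq_maxl.
      by apply: (Kmono' m) => //; exact: leq_maxr.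
    - by move=> r x [n hx]; exists n; case: (KL n) => _ _ H; exact: H.
  have [g Hg] := hl U UL.
  have [N HN] : exists N, forall m x, K m x -> K N x.
    have [N hN] := (Hg g).2 (lp_self g).
    exists N => m x hx; have [t ->] := (Hg x).1 (ex_intro _ m hx).
    by case: (KL N) => _ _ H; exact: H.
  have E : forall n, exists u z, 1 = rho ^+ n * u + z * c.
    elim=> [|n [u [z ez]]]; first by exists 1, 0; rewrite expr0 mul1r mul0r addr0.
    have [u' eu'] := commR u.
    exists (u' * u0), (rho ^+ n * u * z1 + z).
    have h1 := congr1 (fun w => rho ^+ n * u * w) e1; rewrite /= mulr1 in h1.
    rewrite {1}ez {1}h1 eu0; rewrite mulrDr mulrDl addrA; congr (_ + _ + _).
      by rewrite mulrA -(mulrA _ u rho) eu' exprSr !mulrA.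
    by rewrite mulrA.
  have Rc_K1 : forall w, lprinc c w -> K 1%N w.
    move=> w [z ->]; rewrite /K expr1 mulrA; have [t et] := PbsubRb _ (Pb_r z).
    by rewrite et -mulrA -eab; exact: lpA.
  have key : forall w, lprinc c w -> (exists r v, w = rho ^+ N * r + v * a) -> lprinc a w.
    move=> w hw [r [v ew]]; have hKN := HN _ _ (Rc_K1 _ hw).
    have hK2 : K (N + N)%N r.
      rewrite /K exprD -mulrA.
      have -> : rho ^+ N * (rho ^+ N * r) = rho ^+ N * w - rho ^+ N * v * a.
        by rewrite ew mulrDr (mulrA _ v a) addrK.
      by apply: lpB => //; exact: lpA.
    have [s es] := HN _ _ hK2.
    by rewrite ew es; apply: lpD; exact: lpA.
  have [u [z0 e0]] := E N.
  have [u' eu'] := powL N u.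
  have [a' ea'] := powR N a.
  have [c' ec'] := powR N c.
  have ez0 : z0 * c = 1 - rho ^+ N * u by rewrite e0 addrAC subrr add0r.
  exists (rho ^+ N), (z0 * c); split.
  + move=> [t et]; apply: (nlc (u' * t * b + z0)).
    by rewrite [RHS]e0 eu' et eab mulrDl !mulrA.
  + move=> [t et]; apply: cnRa; apply: key; first exact: lp_self.
    exists (c' * u), (c * t).
    by rewrite mulrA -ec' -(mulrA c t a) -et -mulrA -mulrDr -e0 mulr1.
  + apply: key; first by exists (rho ^+ N * z0); rewrite mulrA.
    exists (1 - rho ^+ N * u), 0.
    by rewrite ez0 mul0r addr0.
  + apply: key; first by exists (a * z0); rewrite mulrA.
    exists (- (a' * u)), 1.
    by rewrite ez0 mulrBr mulr1 mul1r mulrN [RHS]addrC (mulrA a) ea' -mulrA.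
  + by exists z0.
- have Qrho : Q rho.
    exists rho, 0; split; last by rewrite mul0r addr0.
    by apply/Hl; exact: lp_self.
  have [k ek] := (Hq rho).1 Qrho.
  have [k' ek'] := (Hr (k * rho)).1 (Pb_l k).
  have k0 : k <> 0 by move=> e; apply: rho0; rewrite ek e mul0r.
  have eqk : q * k' = rho.
    by apply: (canc_l hd k0); rewrite mulrA -ek -ek'.
  case: (classic (exists u, ~ lprinc b (k' * u))) => [[u hu] | hno]; last first.
    exfalso.
    have Pbk' : Pb k'.
      by move=> u; apply: NNPP => h; apply: hno; exists u.
    have [z ez] := (Hl k').1 Pbk'.
    have qz : q * z = 1 by apply: (canc_r hd rho0); rewrite mul1r -mulrA -ez eqk.
    by apply: nQ1; apply/Hq; exists z; rewrite (dom_inv hd qz).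
  have Rbqs : lprinc b (q * (k' * u)) by rewrite mulrA eqk; apply: PbsubRb; exact: Pb_r.
  have [t et] := Rbqs.
  have Qa : Q a.
    exists 0, b; split; last by rewrite add0r.
    by move=> v; rewrite mul0r; exact: lp0.
  have Qc : Q c.
    exists 0, 1; split; last by rewrite add0r mul1r.
    by move=> v; rewrite mul0r; exact: lp0.
  have hxy : q * (k' * u * c) = t * a by rewrite mulrA et -mulrA -eab.
  exists q, (k' * u * c); split.
  + move=> [m em]; have [n en] := (Hq c).1 Qc.
    by apply: cnRa; exists (n * m); rewrite en em mulrA.
  + move=> [m em]; apply: hu; exists m; apply: (canc_r hd c0).
    by rewrite em -mulrA -eab.
  + by rewrite hxy; exact: lpA.
  + have [w ew] := (Hq a).1 Qa.
    by exists (w * t); rewrite {1}ew -mulrA hxy mulrA.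
  + by exists (k' * u).
Qed.

Lemma lp_trans (R : unitRingType) (a X Y Z : R) :
  lprinc a (X - Y) -> lprinc a (Y - Z) -> lprinc a (X - Z).
Proof.
move=> h1 h2; have -> : X - Z = (X - Y) + (Y - Z) by rewrite addrA subrK.
exact: lpD.
Qed.

Lemma lp_sym (R : unitRingType) (a X Y : R) : lprinc a (X - Y) -> lprinc a (Y - X).
Proof. by move=> h; rewrite -opprB; exact: lpN. Qed.

Unset Implicit Arguments.

Theorem corollary3p8 (R : unitRingType) :
  is_PID R -> bounded_ring R ->
  (forall a : R, a <> 0 -> a \isn't a GRing.unit ->
     (c_irreducible a <-> irreducible_elt a)) /\
  (forall P : R -> Prop, is_left_ideal P -> (exists x, P x /\ x <> 0) ->
     (completely_prime P <-> maximal_left_ideal P)).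
Proof.
move=> hPID hbd; have hPID' := hPID; case: hPID' => hd hl hr.
split.
- move=> a a0 anu; split; last first.
    move=> [_ Hirr] [_ [b [b' [c' [c [[bnu b'nu _ _] eab _ _]]]]]].
    by case: (Hirr b b' eab) => h; [move: bnu | move: b'nu]; rewrite h.
  move=> Hc; split => // b c eabc.
  apply: NNPP => hbc.
  have bnu : b \isn't a GRing.unit by apply/negP => h; apply: hbc; left.
  have cnu : c \isn't a GRing.unit by apply/negP => h; apply: hbc; right.
  have [x [y [xn yn xy ay cy]]] := keyL hPID hbd a0 eabc bnu cnu.
  apply: Hc.
  pose I1 := fun w => lprinc a (w * y).
  have I1L : is_left_ideal I1.
    split.
    - by rewrite /I1 mul0r; exact: lp0.
    - by move=> u v hu hv; rewrite /I1 mulrDl; apply: lpD.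
    - by move=> r u hu; rewrite /I1 -mulrA; apply: lpM.
  pose I2 := fun w => exists u v, w = u * y + v * a.
  have I2L : is_left_ideal I2.
    split.
    - by exists 0, 0; rewrite !mul0r addr0.
    - move=> w1 w2 [u1 [v1 ->]] [u2 [v2 ->]]; exists (u1 + u2), (v1 + v2).
      by rewrite !mulrDl addrACA.
    - by move=> r w [u [v ->]]; exists (r * u), (r * v); rewrite mulrDr !mulrA.
  have [k Hk] := hl I1 I1L.
  have [d Hd] := hl I2 I2L.
  have [k'' ek] := (Hk a).1 ay.
  have I2a : I2 a by exists 0, 1; rewrite mul0r add0r mul1r.
  have I2y : I2 y by exists 1, 0; rewrite mul0r addr0 mul1r.
  have [d' ed] := (Hd a).1 I2a.
  have I2d : I2 d by apply/Hd; exact: lp_self.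
  have d0 : d <> 0 by move=> e; apply: a0; rewrite ed e mulr0.
  have hphi : forall r, exists u, lprinc a (r * d - u * y).
    move=> r; have [u [v e]] : I2 (r * d) by case: I2L => _ _ H; apply: H.
    by exists u; rewrite e addrAC subrr add0r; exact: lpA.
  pose phi := fun r => proj1_sig (constructive_indefinite_description _ (hphi r)).
  have Hphi : forall r, lprinc a (r * d - phi r * y) :=
    fun r => proj2_sig (constructive_indefinite_description _ (hphi r)).
  have HkE : forall w, lprinc k w <-> lprinc a (w * y) := fun w => iff_sym (Hk w).
  split => //; exists d', d, k'', k; split => //.
  + split.
    * apply/negP => /unitrP [i [h1 h2]]; apply: yn.
      have [e ee] := (Hd y).1 I2y.
      exists (e * i); by rewrite ee ed !mulrA -(mulrA e i d') h1 mulr1.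
    * apply/negP => /unitrP [i [h1 h2]].
      have : I2 1 by rewrite -h1; case: I2L => _ _ H; apply: H.
      move=> [u [v e]]; have [z ez] := cy.
      apply: (negP cnu). apply: (@unit_of R hd (u * z + v * b) c).
      by rewrite mulrDl -mulrA -ez -mulrA -eabc -e.
    * apply/negP => /unitrP [i [h1 h2]]; apply: xn.
      have [e ee] := (Hk x).1 xy.
      exists (e * i); by rewrite ee ek !mulrA -(mulrA e i k'') h1 mulr1.
    * apply/negP => /unitrP [i [h1 h2]]; apply: yn.
      have := (HkE 1).1 (ex_intro _ i (esym h1)).
      by rewrite mul1r.
  + exists phi; split.
    * move=> x1 y1 [t et]; apply/HkE; rewrite mulrBl.
      apply: (lp_trans (Y := x1 * d)); first exact: lp_sym.
      apply: (lp_trans (Y := y1 * d)); last exact: Hphi.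
      by rewrite -mulrBl et -mulrA -ed; exact: lpA.
    * move=> x1 y1; apply/HkE; rewrite mulrBl mulrDl.
      apply: (lp_trans (Y := (x1 + y1) * d)); first exact: lp_sym.
      by rewrite mulrDl opprD addrACA; apply: lpD.
    * move=> r x1; apply/HkE; rewrite mulrBl -mulrA.
      apply: (lp_trans (Y := r * (x1 * d))); first by rewrite mulrA; exact: lp_sym.
      by rewrite -mulrBr; exact: lpM.
    * move=> x1 y1 /HkE; rewrite mulrBl => h.
      have : lprinc a (x1 * d - y1 * d).
        apply: (lp_trans (Y := phi x1 * y)); first exact: Hphi.
        apply: (lp_trans (Y := phi y1 * y)) => //; exact: lp_sym.
      move=> [m em]; exists m; apply: (canc_r hd d0).
      by rewrite mulrBl em ed mulrA.
    * move=> w; have [x1 ex1] : lprinc d (w * y).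
        by apply/Hd; case: I2L => _ _ H; apply: H.
      exists x1; apply/HkE; rewrite mulrBl ex1; exact: Hphi.
- move=> P HP [x0 [Px0 x00]]; have [a Ha] := hl P HP.
  have a0 : a <> 0.
    by move=> e; apply: x00; have [r ->] := (Ha x0).1 Px0; rewrite e mulr0.
  split.
  + move=> [Hex Hcp]; split => // J HJ PJ.
    have [j Hj] := hl J HJ.
    have Ja : J a by apply: PJ; apply/Ha; exact: lp_self.
    have [t et] := (Hj a).1 Ja.
    case: (classic (t \is a GRing.unit)) => tu.
      left => w; split; last exact: PJ.
      move=> Jw; apply/Ha; have [s es] := (Hj w).1 Jw.
      case/unitrP: tu => i [h1 h2]; exists (s * i).
      by rewrite es et !mulrA -(mulrA s i t) h1 mulr1.
    case: (classic (j \is a GRing.unit)) => ju.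
      right => w; apply/Hj; case/unitrP: ju => i [h1 h2]; exists (w * i).
      by rewrite -mulrA h1 mulr1.
    exfalso.
    have tnu : t \isn't a GRing.unit by apply/negP.
    have jnu : j \isn't a GRing.unit by apply/negP.
    have [x [y [xn yn xy ay _]]] := keyL hPID hbd a0 et tnu jnu.
    case: (Hcp x y).
    * by apply/Ha.
    * move=> z /Ha [r ->]; apply/Ha; rewrite -mulrA; exact: lpM.
    * by move/Ha.
    * by move/Ha.
  + move=> [_ Hex Hmax]; split => // x y Pxy Hy.
    case: (classic (P y)) => Py; [by right | left].
    pose Q := fun z => P (z * y).
    have QL : is_left_ideal Q.
      case: HP => H0 HD HM; split.
      - by rewrite /Q mul0r.
      - by move=> u v hu hv; rewrite /Q mulrDl; apply: HD.
      - by move=> r u hu; rewrite /Q -mulrA; apply: HM.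
    case: (Hmax Q QL Hy) => HQ; first exact: (HQ x).1.
    by exfalso; apply: Py; have := HQ 1; rewrite /Q mul1r.
Qed.
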